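(* Let $G$ be a group acting linearly and isometrically on a real Hilbert space $M$. Let $X=t_0+\sigma\epsilon$ where $t_0$ is a fixed point of the action, $\sigma>0$, $\mathbb{E}(\epsilon)=0$ and $\mathbb{E}(\|\epsilon\|^2)=1$. If $[X]$ admits a Fréchet mean $[m_\star]$, then $$d_Q([t_0],[m_\star])=\sigma\sup_{\|v\|=1}\mathbb{E}\Big(\sup_{g\in G}\langle v,g\cdot\epsilon\rangle\Big).$$
   Context: $M$ is a real Hilbert space with inner product $\langle\cdot,\cdot\rangle$ and norm $\|\cdot\|$; the action is linear and isometric ($\|g\cdot x\|=\|x\|$). $[m]=\{g\cdot m:g\in G\}$, $d_Q([a],[b])=\inf_{g}\|g\cdot a-b\|$, $F(m)=\mathbb{E}\big(\inf_g\|g\cdot X-m\|^2\big)$, and $[m_\star]$ is a Fréchet mean of $[X]$ if $m_\star$ globally minimises $F$. *)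

(* Defs.v *)
From HB Require Import structures.
From mathcomp Require Import all_boot all_order all_algebra.
From mathcomp Require Import monoid.
From mathcomp Require Import all_classical all_reals all_analysis.
Set Implicit Arguments. Unset Strict Implicit. Unset Printing Implicit Defensive.
Import Order.TTheory GRing.Theory Num.Theory.
Import numFieldNormedType.Exports.
Local Open Scope classical_set_scope.
Local Open Scope ring_scope.

(* Together with completeness of [M] this makes [M] a real Hilbert space. *)
Definition is_inner_product (R : realType) (M : normedModType R)
  (ip : M -> M -> R) : Prop :=
  [/\ (forall x y, ip x y = ip y x),
      (forall (a : R) (x y z : M), ip (a *: x + y) z = a * ip x z + ip y z) &
      (forall x : M, `|x| ^+ 2 = ip x x)].

Definition linear_isometric_action (R : realType) (G : groupType)
  (M : normedModType R) (act : G -> M -> M) : Prop :=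
  [/\ (forall x, act 1%g x = x),
      (forall g h x, act (g * h)%g x = act g (act h x)),
      (forall g (a : R) (x y : M), act g (a *: x + y) = a *: act g x + act g y) &
      (forall g x, `|act g x| = `|x|)].

Definition dQ (R : realType) (G : groupType) (M : normedModType R)
  (act : G -> M -> M) (a b : M) : R :=
  inf [set `|act g a - b| | g in [set: G]].

Definition orbit_sqdist (R : realType) (G : groupType) (M : normedModType R)
  (act : G -> M -> M) (x m : M) : R :=
  inf [set `|act g x - m| ^+ 2 | g in [set: G]].

Definition frechet_fun (R : realType) (d : measure_display) (T : measurableType d)
  (P : probability T R) (G : groupType) (M : normedModType R)
  (act : G -> M -> M) (X : T -> M) (m : M) : \bar R :=
  (\int[P]_w (orbit_sqdist act (X w) m)%:E)%E.

(* [m_star] is (a representative of) a Fréchet mean of [X]: it globally minimises F *)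
Definition is_frechet_mean (R : realType) (d : measure_display) (T : measurableType d)
  (P : probability T R) (G : groupType) (M : normedModType R)
  (act : G -> M -> M) (X : T -> M) (m_star : M) : Prop :=
  forall m : M, (frechet_fun P act X m_star <= frechet_fun P act X m)%E.

Definition orbit_sup_ip (R : realType) (G : groupType) (M : normedModType R)
  (ip : M -> M -> R) (act : G -> M -> M) (v e : M) : R :=
  sup [set ip v (act g e) | g in [set: G]].

(* Main.v *)
Require Import Defs.
From HB Require Import structures.
From mathcomp Require Import all_boot all_order all_algebra.
From mathcomp Require Import monoid.
From mathcomp Require Import all_classical all_reals all_analysis.
From mathcomp Require Import ring lra.
Import Order.TTheory GRing.Theory Num.Theory.
Import numFieldNormedType.Exports.
Local Open Scope classical_set_scope.
Local Open Scope ring_scope.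

Section Gen.
Variable R : realType.

Lemma sup_affine (I : Type) (i0 : I) (f : I -> R) (B a c : R) :
  0 < c -> (forall i, f i <= B) ->
  sup [set c * f i + a | i in [set: I]] = c * sup [set f i | i in [set: I]] + a.
Proof.
move=> c0 fB.
set S := [set f i | i in [set: I]].
set S' := [set c * f i + a | i in [set: I]].
have hS : has_sup S by split; [exists (f i0), i0 | exists B => _ [i _ <-]].
have hS' : has_sup S'.
  split; first by exists (c * f i0 + a), i0.
  exists (c * B + a) => _ [i _ <-]; rewrite lerD2r ler_pM2l //.
apply/le_anti/andP; split.
  apply: ge_sup; first by exists (c * f i0 + a), i0.
  move=> _ [i _ <-]; rewrite lerD2r ler_pM2l //.
  by apply: sup_upper_bound => //; exists i.
rewrite -lerBrDr -ler_pdivlMl //.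
apply: ge_sup; first by exists (f i0), i0.
move=> _ [i _ <-]; rewrite ler_pdivlMl // lerBrDr.
by apply: sup_upper_bound => //; exists i.
Qed.

Lemma inf_affine (I : Type) (i0 : I) (f : I -> R) (B a c : R) :
  0 < c -> (forall i, f i <= B) ->
  inf [set a - c * f i | i in [set: I]] = a - c * sup [set f i | i in [set: I]].
Proof.
move=> c0 fB; rewrite /inf.
have -> : -%R @` [set a - c * f i | i in [set: I]] = [set c * f i + (- a) | i in [set: I]].
  apply/seteqP; split => x.
    by case=> _ [i _ <-] <-; exists i => //; rewrite opprB addrC.
  by case=> i _ <-; exists (a - c * f i); [exists i|rewrite opprB addrC].
by rewrite (@sup_affine I i0 f B) // opprD opprK addrC.
Qed.

Lemma sup_cst (I : Type) (i0 : I) (x : R) : sup [set x | i in [set: I]] = x.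
Proof.
have -> : [set x | i in [set: I]] = [set x].
  by apply/seteqP; split => y /=; [case=> ? _ <- | move=> ->; exists i0].
exact: sup1.
Qed.

Lemma inf_cst (I : Type) (i0 : I) (x : R) : inf [set x | i in [set: I]] = x.
Proof.
have -> : [set x | i in [set: I]] = [set x].
  by apply/seteqP; split => y /=; [case=> ? _ <- | move=> ->; exists i0].
exact: inf1.
Qed.

End Gen.
Section IP.
Variables (R : realType) (M : normedModType R) (ip : M -> M -> R).
Hypothesis hip : is_inner_product ip.

Lemma ipC x y : ip x y = ip y x. Proof. by case: hip. Qed.
Lemma ipL a x y z : ip (a *: x + y) z = a * ip x z + ip y z. Proof. by case: hip. Qed.
Lemma ipN2 x : `|x| ^+ 2 = ip x x. Proof. by case: hip. Qed.

Lemma ip0l z : ip 0 z = 0.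
Proof.
have := ipL 1 0 0 z; rewrite scaler0 addr0 mul1r => h.
have : ip 0 z + ip 0 z - ip 0 z = 0 by rewrite -h subrr.
by rewrite addrK.
Qed.
Lemma ip0r z : ip z 0 = 0. Proof. by rewrite ipC ip0l. Qed.
Lemma ipZl a x z : ip (a *: x) z = a * ip x z.
Proof. by have := ipL a x 0 z; rewrite addr0 ip0l addr0. Qed.
Lemma ipDl x y z : ip (x + y) z = ip x z + ip y z.
Proof. by have := ipL 1 x y z; rewrite scale1r mul1r. Qed.
Lemma ipNl x z : ip (- x) z = - ip x z.
Proof. by rewrite -scaleN1r ipZl mulN1r. Qed.

Lemma norm_expand (s : R) y u :
  `|s *: y - u| ^+ 2 = s ^+ 2 * `|y| ^+ 2 - 2 * s * ip u y + `|u| ^+ 2.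
Proof.
rewrite !ipN2 ipDl ipZl ipNl (ipC y) (ipC u) ipDl ipZl ipNl ipDl ipZl ipNl.
rewrite (ipC u y); ring.
Qed.

Lemma ip_le x y : ip x y <= `|x| * `|y|.
Proof.
have [->|x0] := eqVneq x 0; first by rewrite ip0l normr0 mul0r.
have [->|y0] := eqVneq y 0; first by rewrite ip0r normr0 mulr0.
have nx : 0 < `|x| by rewrite normr_gt0.
have ny : 0 < `|y| by rewrite normr_gt0.
set t := `|y| / `|x|.
have t0 : 0 < t by rewrite divr_gt0.
have tx : t * `|x| = `|y| by rewrite /t divfK // gt_eqF.
have := norm_expand t x y.
have := normr_ge0 (t *: x - y).
move=> h0 e.
have h1 : 0 <= t ^+ 2 * `|x| ^+ 2 - 2 * t * ip y x + `|y| ^+ 2.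
  by rewrite -e exprn_ge0.
rewrite ipC in h1.
have h2 : t * ip x y <= t * (`|x| * `|y|) by nra.
by rewrite ler_pM2l in h2.
Qed.

Lemma ip_abs x y : `|ip x y| <= `|x| * `|y|.
Proof.
rewrite ler_norml ip_le andbT.
have := ip_le (- x) y; rewrite ipNl normrN; lra.
Qed.

End IP.
Section Act.
Variables (R : realType) (G : groupType) (M : normedModType R) (ip : M -> M -> R)
  (act : G -> M -> M).
Hypothesis hip : is_inner_product ip.
Hypothesis hact : linear_isometric_action act.

Lemma act1 x : act 1%g x = x. Proof. by case: hact. Qed.
Lemma actL g a x y : act g (a *: x + y) = a *: act g x + act g y. Proof. by case: hact. Qed.
Lemma actN g x : `|act g x| = `|x|. Proof. by case: hact. Qed.

Lemma osi_bound u e g : ip u (act g e) <= `|u| * `|e|.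
Proof. by rewrite -(actN g e) ip_le. Qed.

Lemma osi_has_sup u e : has_sup [set ip u (act g e) | g in [set: G]].
Proof.
split; first by exists (ip u (act 1%g e)), 1%g.
by exists (`|u| * `|e|) => _ [g _ <-]; exact: osi_bound.
Qed.

Lemma osi_ge u e g : ip u (act g e) <= orbit_sup_ip ip act u e.
Proof. by apply: sup_upper_bound; [exact: osi_has_sup | exists g]. Qed.

Lemma osi_le u e : orbit_sup_ip ip act u e <= `|u| * `|e|.
Proof.
apply: ge_sup; first by exists (ip u (act 1%g e)), 1%g.
by move=> _ [g _ <-]; exact: osi_bound.
Qed.

Lemma osi_abs u e : `|orbit_sup_ip ip act u e| <= `|u| * `|e|.
Proof.
rewrite ler_norml osi_le andbT.
have h1 := osi_ge u e 1%g; rewrite act1 in h1.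
have h2 := @ip_abs R M ip hip u e; rewrite ler_norml in h2.
case/andP: h2 => h2 _; lra.
Qed.

Lemma osi_Z l u e : 0 <= l ->
  orbit_sup_ip ip act (l *: u) e = l * orbit_sup_ip ip act u e.
Proof.
rewrite le_eqVlt => /orP[/eqP <-|l0].
  rewrite scale0r mul0r /orbit_sup_ip.
  under eq_imagel do rewrite (@ip0l R M ip hip).
  by rewrite (@sup_cst R G 1%g).
rewrite /orbit_sup_ip.
under eq_imagel do rewrite (@ipZl R M ip hip) -[_ * _]addr0.
by rewrite (@sup_affine _ _ 1%g _ (`|u| * `|e|)) ?addr0 //; exact: osi_bound.
Qed.

Lemma sqdist_eq t0 (s : R) e u : (forall g, act g t0 = t0) -> 0 < s ->
  orbit_sqdist act (t0 + s *: e) (t0 + u) =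
  (s ^+ 2 * `|e| ^+ 2 + `|u| ^+ 2) - (2 * s) * orbit_sup_ip ip act u e.
Proof.
move=> fix0 s0; rewrite /orbit_sqdist.
have E g : `|act g (t0 + s *: e) - (t0 + u)| ^+ 2 =
   (s ^+ 2 * `|e| ^+ 2 + `|u| ^+ 2) - (2 * s) * ip u (act g e).
  rewrite (addrC t0) actL fix0 opprD addrA addrK (@norm_expand R M ip hip) actN; ring.
under eq_imagel do rewrite E.
rewrite (@inf_affine _ _ 1%g _ (`|u| * `|e|)) //; last exact: osi_bound.
by rewrite mulr_gt0.
Qed.

End Act.
Theorem mainTheorem19
  (R : realType) (G : groupType) (M : completeNormedModType R)
  (ip : M -> M -> R) (act : G -> M -> M)
  (d : measure_display) (T : measurableType d) (P : probability T R)
  (eps : T -> M) (t0 : M) (sigma : R) (m_star : M) :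
  is_inner_product ip ->
  linear_isometric_action act ->
  (forall g, act g t0 = t0) ->
  0 < sigma ->
  (* E(eps) = 0 (weakly: every coordinate <v, eps> is integrable with mean 0) *)
  (forall v : M, P.-integrable [set: T] (fun w => (ip v (eps w))%:E) /\
                 (\int[P]_w (ip v (eps w))%:E = 0)%E) ->
  (* E(||eps||^2) = 1 *)
  measurable_fun [set: T] (fun w => `|eps w|) ->
  (\int[P]_w (`|eps w| ^+ 2)%:E = 1)%E ->
  (* measurability of the random variables appearing in the statement *)
  (forall v : M, measurable_fun [set: T] (fun w => orbit_sup_ip ip act v (eps w))) ->
  (forall m : M, measurable_fun [set: T]
                   (fun w => orbit_sqdist act (t0 + sigma *: eps w) m)) ->
  (* [m_star] is a Fréchet mean of [X], X = t0 + sigma eps *)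
  is_frechet_mean P act (fun w => t0 + sigma *: eps w) m_star ->
  dQ act t0 m_star =
  sigma * sup [set Rintegral P [set: T] (fun w => orbit_sup_ip ip act v (eps w))
              | v in [set v : M | `|v| = 1]].
Proof.
move=> hip hact fix0 s0 hmean mN hN2 msup msq hfm.
have iZ (k : R) (f : T -> R) : P.-integrable setT (EFin \o f) ->
    P.-integrable setT (EFin \o (fun w => k * f w)).
  move=> hf; have := integrableZl measurableT k hf; apply: eq_integrable => //.
have iD (f g : T -> R) : P.-integrable setT (EFin \o f) ->
    P.-integrable setT (EFin \o g) ->
    P.-integrable setT (EFin \o (fun w => f w + g w)).
  move=> hf hg; have := integrableD measurableT hf hg; apply: eq_integrable => //.
have iB (f g : T -> R) : P.-integrable setT (EFin \o f) ->
    P.-integrable setT (EFin \o g) ->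
    P.-integrable setT (EFin \o (fun w => f w - g w)).
  move=> hf hg; have := integrableB measurableT hf hg; apply: eq_integrable => //.
have iC (c : R) : P.-integrable setT (EFin \o (fun _ : T => c)).
  exact: finite_measure_integrable_cst.
have iN2 : P.-integrable setT (EFin \o (fun w => `|eps w| ^+ 2)).
  apply/integrableP; split.
    by apply/measurable_realfun.measurable_EFinP; exact: measurable_realfun.measurable_funX.
  under eq_integral do rewrite /comp abse_EFin ger0_norm ?exprn_ge0 //.
  by rewrite hN2 ltry.
have iD1 : P.-integrable setT (EFin \o (fun w => 1 + `|eps w| ^+ 2)).
  exact: iD.
have iN : P.-integrable setT (EFin \o (fun w => `|eps w|)).
  apply: le_integrable iD1 => //; first exact/measurable_realfun.measurable_EFinP.
  move=> w _; rewrite /comp !abse_EFin lee_fin ger0_norm // ger0_norm; last first.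
    by rewrite addr_ge0 // exprn_ge0.
  have := normr_ge0 (eps w); nra.
have iS u : P.-integrable setT (EFin \o (fun w => orbit_sup_ip ip act u (eps w))).
  apply: le_integrable (iZ `|u| _ iD1) => //; first exact/measurable_realfun.measurable_EFinP.
  move=> w _; rewrite /comp !abse_EFin lee_fin.
  apply: (le_trans (@osi_abs R G M ip act hip hact u (eps w))).
  rewrite ger0_norm; last by rewrite mulr_ge0 // addr_ge0 // exprn_ge0.
  apply: ler_wpM2l => //.
  have := normr_ge0 (eps w); nra.
have toR (f : T -> R) : P.-integrable setT (EFin \o f) ->
    (\int[P]_w (f w)%:E)%E = (Rintegral P setT f)%:E.
  by move=> hf; rewrite /Rintegral fineK // integrable_fin_num.
have RN2 : Rintegral P setT (fun w => `|eps w| ^+ 2) = 1.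
  by rewrite /Rintegral hN2.
pose k v := Rintegral P [set: T] (fun w => orbit_sup_ip ip act v (eps w)).
have Fu u : frechet_fun P act (fun w => t0 + sigma *: eps w) (t0 + u) =
    (sigma ^+ 2 + `|u| ^+ 2 - 2 * sigma * k u)%:E.
  rewrite /frechet_fun.
  under eq_integral do rewrite (@sqdist_eq R G M ip act hip hact t0 sigma _ u fix0 s0).
  have i1 : P.-integrable setT (EFin \o (fun w => sigma ^+ 2 * `|eps w| ^+ 2)).
    exact: iZ.
  have i2 : P.-integrable setT
      (EFin \o (fun w => sigma ^+ 2 * `|eps w| ^+ 2 + `|u| ^+ 2)).
    exact: (iD _ (fun _ => `|u| ^+ 2) i1 (iC _)).
  have i3 : P.-integrable setT
      (EFin \o (fun w => 2 * sigma * orbit_sup_ip ip act u (eps w))).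
    exact: iZ.
  rewrite (toR _ (iB _ _ i2 i3)).
  rewrite RintegralB // RintegralD // RintegralZl // RintegralZl // Rintegral_cst //.
  have P1 : P [set: T] = 1%E by apply: probability_setT.
  rewrite RN2 (_ : fine _ = 1); last exact: (congr1 fine P1).
  by rewrite !mulr1.
have kZ l v : 0 <= l -> k (l *: v) = l * k v.
  move=> l0; rewrite /k.
  under eq_Rintegral do rewrite (@osi_Z R G M ip act hip hact l v _ l0).
  by rewrite RintegralZl.
have k0 : k 0 = 0.
  by have := kZ 0 0 (lexx 0); rewrite scale0r mul0r.
have kge0 v : 0 <= k v.
  have [ii i0] := hmean v.
  have -> : 0 = Rintegral P setT (fun w => ip v (eps w)) by rewrite /Rintegral i0.
  apply: le_Rintegral => // w _.
  by have := @osi_ge R G M ip act hip hact v (eps w) 1%g; rewrite act1.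
have kle v : k v <= `|v| * Rintegral P setT (fun w => `|eps w|).
  rewrite -RintegralZl //; apply: le_Rintegral => //; first exact: iZ.
  by move=> w _; exact: osi_le.
have [w ew] : exists w, eps w != 0.
  apply: contrapT => nex.
  have e0 w : eps w = 0.
    apply/eqP; apply: contra_notP nex => /negP h; by exists w.
  move: hN2; under eq_integral do rewrite e0 normr0 expr2 mulr0.
  have -> : (\int[P]_w (0:R)%:E = 0)%E by exact: integral0.
  by move/eqP; rewrite eq_sym (@eqe R 1 0) oner_eq0.
pose v1 := `|eps w|^-1 *: eps w.
have nw : 0 < `|eps w| by rewrite normr_gt0.
have v1n : `|v1| = 1.
  by rewrite /v1 normrZ normrV ?unitfE ?gt_eqF // normr_id mulVf // gt_eqF.
set S := [set k v | v in [set v : M | `|v| = 1]].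
have hS : has_sup S.
  split; first by exists (k v1), v1.
  exists (Rintegral P setT (fun w => `|eps w|)) => _ [v /= vn <-].
  by have := kle v; rewrite vn mul1r.
have kH v : `|v| = 1 -> k v <= sup S.
  by move=> vn; apply: sup_upper_bound => //; exists v.
have H0 : 0 <= sup S by apply: le_trans (kge0 v1) (kH v1 v1n).
set H := sup S.
set u := m_star - t0.
have em : m_star = t0 + u by rewrite /u addrC subrK.
have hmin (m : M) : (frechet_fun P act (fun w => (t0 + sigma *: eps w)%R) (t0 + u)%R <=
              frechet_fun P act (fun w => (t0 + sigma *: eps w)%R) m)%E.
  by rewrite -em; exact: hfm.
have kuH : k u <= `|u| * H.
  have [->|u0] := eqVneq u 0; first by rewrite k0 normr0 mul0r.
  have nu : 0 < `|u| by rewrite normr_gt0.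
  have eu : u = `|u| *: (`|u|^-1 *: u) by rewrite scalerA mulfV ?gt_eqF // scale1r.
  rewrite {1}eu kZ //.
  apply: ler_wpM2l => //; apply: kH.
  by rewrite normrZ normrV ?unitfE ?gt_eqF // normr_id mulVf // gt_eqF.
set D := 2 * sigma * `|u| * H - `|u| ^+ 2.
have key v : `|v| = 1 -> sigma ^+ 2 * k v ^+ 2 <= D.
  move=> vn.
  have l0 : 0 <= sigma * k v by rewrite mulr_ge0 // ltW.
  have := hmin (t0 + (sigma * k v) *: v).
  rewrite !Fu lee_fin kZ // normrZ vn mulr1 ger0_norm //.
  rewrite /D; nra.
have D0 : 0 <= D by have := key v1 v1n; have := sqr_ge0 (sigma * k v1); nra.
have sH : sigma * H <= Num.sqrt D.
  rewrite -ler_pdivlMl //.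
  apply: ge_sup; first by exists (k v1), v1.
  move=> _ [v /= vn <-]; rewrite ler_pdivlMl //.
  have l0 : 0 <= sigma * k v by rewrite mulr_ge0 // ltW.
  rewrite -(ger0_norm l0) -sqrtr_sqr ler_sqrt //.
  by rewrite exprMn; exact: key.
have sq := sqr_sqrtr D0.
have sH0 : 0 <= sigma * H by rewrite mulr_ge0 // ltW.
have h2 : (sigma * H - `|u|) ^+ 2 <= 0.
  have : (sigma * H) ^+ 2 <= D by nra.
  rewrite /D; nra.
have eu : `|u| = sigma * H.
  move: h2; rewrite le_eqVlt ltNge sqr_ge0 orbF sqrf_eq0 subr_eq0 => /eqP.
  by move=> <-.
rewrite -eu /dQ.
under eq_imagel do rewrite fix0.
by rewrite (@inf_cst R G 1%g) distrC.
Qed.
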